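(* Let $\ell^\infty$ be the space of bounded real sequences with the topology of the sup norm, and let $\mathcal{C}(\ell^\infty,(\ell^\infty)^* )$ be the $\sigma$-algebra on $\ell^\infty$ generated by all continuous linear functionals on $\ell^\infty$. Then $(\ell^\infty,\text{norm topology},\mathcal{C}(\ell^\infty,(\ell^\infty)^* ))$ satisfies: (LM1) every point admits a local basis of neighborhoods consisting of measurable sets; (LM2) every continuous linear functional is measurable; (LM3) the addition $(x,y)\mapsto x+y$ is measurable from the product $\sigma$-algebra $\mathcal{C}(\ell^\infty,(\ell^\infty)^* )^{\otimes2}$ to $\mathcal{C}(\ell^\infty,(\ell^\infty)^* )$; (LM4) the $\sigma$-algebra is invariant under dilations $x\mapsto tx$, $t\ne0$. *)

(* Defs.v *)
From HB Require Import structures.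
From mathcomp Require Import all_boot all_order all_algebra.
From mathcomp Require Import all_classical all_reals all_analysis.
Set Implicit Arguments. Unset Strict Implicit. Unset Printing Implicit Defensive.
Import Order.TTheory GRing.Theory Num.Theory.
Local Open Scope classical_set_scope.
Local Open Scope ring_scope.

Record linf (R : realType) := Linf {
  lseq : nat -> R ;
  lbnd : exists M : R, forall n, `|lseq n| <= M }.

Section Linf.
Variable R : realType.

Lemma ladd_bnd (x y : linf R) :
  exists M : R, forall n, `|lseq x n + lseq y n| <= M.
Proof.
case: (lbnd x) => M1 H1; case: (lbnd y) => M2 H2.
exists (M1 + M2) => n; apply: le_trans (ler_normD _ _) _; exact: lerD.
Qed.

Lemma lscale_bnd (t : R) (x : linf R) :
  exists M : R, forall n, `|t * lseq x n| <= M.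
Proof.
case: (lbnd x) => M H; exists (`|t| * M) => n; rewrite normrM.
exact: ler_wpM2l.
Qed.

Definition ladd (x y : linf R) : linf R :=
  @Linf R (fun n => lseq x n + lseq y n) (ladd_bnd x y).
Definition lscale (t : R) (x : linf R) : linf R :=
  @Linf R (fun n => t * lseq x n) (lscale_bnd t x).

Definition ldist (x y : linf R) : R :=
  sup [set `|lseq x n - lseq y n| | n in [set: nat]].

Definition linf_nbhs (x : linf R) (N : set (linf R)) : Prop :=
  exists2 r : R, 0 < r & [set y | ldist x y < r] `<=` N.

Definition linf_continuous (f : linf R -> R) : Prop :=
  forall (x : linf R) (e : R), 0 < e ->
    exists2 d : R, 0 < d &
      forall y, ldist x y < d -> `|f y - f x| < e.

Definition linf_linear (f : linf R -> R) : Prop :=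
  (forall x y, f (ladd x y) = f x + f y) /\
  (forall t x, f (lscale t x) = t * f x).

Definition linf_dual (f : linf R -> R) : Prop :=
  linf_linear f /\ linf_continuous f.

Definition Cyl : set (set (linf R)) :=
  <<s [set f @^-1` B | f in linf_dual & B in [set B : set R | measurable B]] >>.

Definition Cyl2 : set (set (linf R * linf R)) :=
  <<s [set A `*` B | A in Cyl & B in Cyl] >>.

End Linf.

(* Main.v *)
Set Warnings "-all".
Require Import Defs.
From HB Require Import structures.
From mathcomp Require Import all_boot all_order all_algebra.
From mathcomp Require Import all_classical all_reals all_analysis.
Import Order.TTheory GRing.Theory Num.Theory.
Local Open Scope classical_set_scope.
Local Open Scope ring_scope.

Lemma preimage_gen T U (h : T -> U) (G : set (set U)) (S : set (set T)) :
  sigma_algebra setT S -> (forall D, G D -> S (h @^-1` D)) ->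
  forall D, <<s G>> D -> S (h @^-1` D).
Proof.
move=> [S0 SC SU] HG D; apply: (@smallest_sub _ _ _ [set D | S (h @^-1` D)]) => //.
split => /=.
- by rewrite preimage_set0.
- by move=> A SA; rewrite !setTD -preimage_setC -setTD; exact: SC.
- by move=> A SA; rewrite preimage_bigcup; exact: SU.
Qed.

Lemma linf_eq (R : realType) (x y : linf R) : lseq x = lseq y -> x = y.
Proof.
case: x => sx px; case: y => sy py /= E; subst sy.
by rewrite (Prop_irrelevance px py).
Qed.

Set Implicit Arguments.
Section Aux.
Variable R : realType.

Lemma dist_bound (x y : linf R) n : `|lseq x n - lseq y n| <= ldist x y.
Proof.
apply: ub_le_sup; last by exists n.
case: (lbnd x) => Mx Hx; case: (lbnd y) => My Hy.
exists (Mx + My) => _ [m _ <-].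
apply: le_trans (ler_normB _ _) _; exact: lerD.
Qed.

Lemma dist_le (x y : linf R) e :
  (forall n, `|lseq x n - lseq y n| <= e) -> ldist x y <= e.
Proof.
move=> H; apply: ge_sup; first by exists `|lseq x 0 - lseq y 0|; exists 0%N.
by move=> _ [m _ <-].
Qed.

Lemma proj_dual n : linf_dual (fun y : linf R => lseq y n).
Proof.
split; first by split.
move=> x e e0; exists e => // y Hy.
by rewrite distrC; apply: le_lt_trans (dist_bound x y n) Hy.
Qed.

Lemma Cyl_sigma : sigma_algebra setT (@Cyl R).
Proof. exact: smallest_sigma_algebra. Qed.

Lemma Cyl2_sigma : sigma_algebra setT (@Cyl2 R).
Proof. exact: smallest_sigma_algebra. Qed.

Lemma Cyl_gen f B : linf_dual f -> measurable B -> @Cyl R (f @^-1` B).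
Proof. by move=> fd mB; apply: sub_sigma_algebra; exists f => //; exists B. Qed.

Lemma Cyl_bigcap (A : nat -> set (linf R)) :
  (forall n, @Cyl R (A n)) -> @Cyl R (\bigcap_n A n).
Proof.
move=> HA; have := Cyl_sigma; case=> S0 SC SU.
have -> : \bigcap_n A n = setT `\` \bigcup_n (setT `\` A n).
  by rewrite setTD setC_bigcup; apply: eq_bigcapr => n _; rewrite setTD setCK.
by apply: (SC); apply: (SU) => n; apply: (SC).
Qed.

Lemma scale_dual (s : R) f : linf_dual f -> linf_dual (fun x => s * f x).
Proof.
move=> [[fD fZ] fc]; split; first split.
- by move=> x y; rewrite fD mulrDr.
- by move=> t x; rewrite fZ mulrCA.
move=> x e e0.
have s1 : 0 < `|s| + 1 by apply: ltr_wpDl.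
have [d d0 Hd] := fc x (e / (`|s| + 1)) (divr_gt0 e0 s1).
exists d => // y Hy.
rewrite -mulrBr normrM.
apply: le_lt_trans (ler_wpM2l (normr_ge0 s) (ltW (Hd y Hy))) _.
rewrite -[X in _ < X](divfK (lt0r_neq0 s1) e) mulrDr mulr1 mulrC.
by rewrite ltrDl divr_gt0.
Qed.

Lemma Cyl_scale (s : R) A : @Cyl R A -> @Cyl R (lscale s @^-1` A).
Proof.
apply: preimage_gen; first exact: Cyl_sigma.
move=> _ [f fd [B mB <-]].
have -> : lscale s @^-1` (f @^-1` B) = (fun x => s * f x) @^-1` B.
  by apply/funext => x /=; rewrite (proj2 (proj1 fd)).
exact: (Cyl_gen (scale_dual s fd) mB).
Qed.

End Aux.

Theorem proposition5p1 (R : realType) :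
  (* (LM1) local bases of measurable neighborhoods *)
  (forall (x : linf R) (N : set (linf R)), linf_nbhs x N ->
     exists V, [/\ @Cyl R V, linf_nbhs x V & V `<=` N]) /\
  (* (LM2) continuous linear functionals are measurable *)
  (forall f : linf R -> R, linf_dual f ->
     forall B : set R, measurable B -> @Cyl R (f @^-1` B)) /\
  (* (LM3) addition is Cyl (x) Cyl / Cyl measurable *)
  (forall D, @Cyl R D ->
     @Cyl2 R ((fun p : linf R * linf R => ladd p.1 p.2) @^-1` D)) /\
  (* (LM4) invariance under dilations *)
  (forall t : R, t != 0 ->
     forall A : set (linf R), @Cyl R (lscale t @` A) <-> @Cyl R A).
Proof.
split.
  move=> x N [r r0 HN].
  have r2 : 0 < r / 2 by rewrite divr_gt0.
  exists (\bigcap_n ((fun y : linf R => lseq y n) @^-1`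
                      `[lseq x n - r / 2, lseq x n + r / 2]%classic)).
  have E : forall y n, `[lseq x n - r / 2, lseq x n + r / 2]%classic (lseq y n) <->
                       `|lseq x n - lseq y n| <= r / 2.
    by move=> y n; rewrite /= in_itv /= ler_distlC.
  split.
  - apply: Cyl_bigcap => n; apply: Cyl_gen; first exact: proj_dual.
    exact: measurable_itv.
  - exists (r / 2) => // y Hy n _ /=; apply/E.
    by apply: ltW; apply: le_lt_trans (dist_bound x y n) Hy.
  - move=> y Hy; apply: HN => /=.
    apply: le_lt_trans (@dist_le _ x y (r / 2) _) _.
      by move=> n; apply/E; exact: Hy.
    by rewrite ltr_pdivrMr // ltr_pMr // ltr1n.
split; first by move=> f fd B mB; exact: Cyl_gen.
split.
  apply: preimage_gen; first exact: Cyl2_sigma.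
  move=> _ [f fd [B mB <-]].
  pose phi := fun p : linf R * linf R => (f p.1, f p.2).
  have Hphi : forall P : set (R * R)%type, measurable P -> @Cyl2 R (phi @^-1` P).
    move=> P; rewrite measurable_prod_measurableType.
    apply: preimage_gen; first exact: Cyl2_sigma.
    move=> _ [A1 mA1 [A2 mA2 <-]].
    apply: sub_sigma_algebra; exists (f @^-1` A1); first exact: Cyl_gen.
    by exists (f @^-1` A2); first exact: Cyl_gen.
  have -> : (fun p : linf R * linf R => ladd p.1 p.2) @^-1` (f @^-1` B) =
            phi @^-1` ((fun q : R * R => q.1 + q.2) @^-1` B).
    by apply/funext => p /=; rewrite (proj1 (proj1 fd)).
  apply: Hphi.
  have := (measurable_realfun.measurable_funD (@measurable_fst _ _ R R) (@measurable_snd _ _ R R))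
             measurableT B mB.
  by rewrite setTI.
move=> t t0 A; split => HA.
- have -> : A = lscale t @^-1` (lscale t @` A).
    apply/seteqP; split => [a Aa|a [b Ab E]]; first by exists a.
    suff -> : a = b by [].
    apply: linf_eq; apply/funext => n.
    have := congr1 (fun z => lseq z n) E => /= /(mulfI t0) ->.
    by [].
  exact: Cyl_scale.
- have -> : lscale t @` A = lscale t^-1 @^-1` A.
    apply/seteqP; split => [_ [a Aa <-]|y Ay] /=.
      suff -> : lscale t^-1 (lscale t a) = a by [].
      by apply: linf_eq; apply/funext => n /=; rewrite mulKf.
    exists (lscale t^-1 y) => //.
    by apply: linf_eq; apply/funext => n /=; rewrite mulVKf.
  exact: Cyl_scale.
Qed.
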